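(* Let $G$ be a finite $2$-group of order $2^n$ and let $M$ be a normal subgroup of $G$ of order $2^r$. Then for every $0\leq k\leq n$, $$s_k(G)\leq s_k(G/M\times C_2^r).$$
   Context: For a finite $2$-group $G$ of order $2^n$ and $0\le k\le n$, $s_k(G)$ denotes the number of subgroups of $G$ of order $2^k$. $C_2^r$ denotes the elementary abelian $2$-group of order $2^r$. *)

(* Defs.v *)
From mathcomp Require Import all_boot all_fingroup all_solvable.
Set Implicit Arguments. Unset Strict Implicit. Unset Printing Implicit Defensive.

Definition s_k (gT : finGroupType) (G : {set gT}) (k : nat) : nat :=
  #|[set H : {group gT} | (H \subset G) && (#|H| == 2 ^ k)]|.

(* Main.v *)
Require Import Defs.
From mathcomp Require Import all_boot all_fingroup all_solvable.
Set Implicit Arguments. Unset Strict Implicit. Unset Printing Implicit Defensive.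

Module Aux.
Import GroupScope.

Lemma two_elts (T : finType) (A : {set T}) a b x :
  #|A| = 2 -> a \in A -> b \in A -> a != b -> x \in A -> (x == a) || (x == b).
Proof.
move=> oA aA bA nab xA.
have: [set a; b] == A by rewrite eqEcard oA cards2 nab subUset !sub1set aA bA.
by move/eqP=> eA; move: xA; rewrite -eA !inE.
Qed.

Section Key.
Variables (gT cT : finGroupType) (G N H0 : {group gT}) (C : {group cT}) (c : cT).
Hypotheses (sNG : N \subset G) (cGN : G \subset 'C(N)) (oN : #|N| = 2).
Hypotheses (Cc : c \in C) (ntc : c != 1) (oC : #|C| = 2).
Hypotheses (sH0G : H0 \subset G) (tiH0N : H0 :&: N = 1).

Definition chi (x : gT) : cT := if x \in H0 then 1 else c.

Lemma nNG : G \subset 'N(N). Proof. exact: cents_norm. Qed.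

Lemma memN_H0 m : m \in N -> (m \in H0) = (m == 1).
Proof.
move=> Nm; apply/idP/eqP => [H0m|->]; last exact: group1.
have: m \in H0 :&: N by rewrite inE H0m.
by rewrite tiH0N => /set1P.
Qed.

Lemma N_mul m1 m2 : m1 \in N -> m2 \in N -> (m1 * m2 == 1) = ((m1 == 1) == (m2 == 1)).
Proof.
move=> N1 N2; case: (eqVneq m1 1) => [->|n1]; first by rewrite mul1g; case: (m2 == 1).
case: (eqVneq m2 1) => [->|n2]; first by rewrite mulg1 (negPf n1).
have := two_elts oN (group1 N) N1 _ (groupM N1 N2).
rewrite eq_sym n1 => /(_ isT).
have -> : (m1 * m2 == m1) = false by apply/negbTE; apply: contra n2 => /eqP e; rewrite -(mulKg m1 m2) e mulVg.
rewrite orbF => ->.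
by [] .
Qed.

Lemma chi_morphM : {in H0 <*> N &, {morph chi : x y / x * y}}.
Proof.
have cNH0 : N \subset 'C(H0) by rewrite centsC (subset_trans sH0G cGN).
move=> x y; rewrite cent_joinEr //.
case/mulsgP=> h1 m1 H1 M1 ->; case/mulsgP=> h2 m2 H2 M2 ->.
have e : h1 * m1 * (h2 * m2) = (h1 * h2) * (m1 * m2).
  by rewrite !mulgA -(mulgA h1) (centsP cNH0 m1 M1 h2 H2) !mulgA.
rewrite /chi e !(groupMl _ H1) (groupMl _ H2) (groupMl _ (groupM H1 H2)) !memN_H0 ?groupM //.
rewrite N_mul //.
have c2 : c * c = 1 by rewrite -[c * c]/(c ^+ 2) -oC (expg_cardG Cc).
case: (m1 == 1); case: (m2 == 1); rewrite /= ?mulg1 ?mul1g ?c2 //.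
Qed.

Definition theta x : coset_of N * cT := (coset N x, chi x).

Lemma sDG : H0 <*> N \subset G. Proof. by rewrite join_subG sH0G sNG. Qed.

Lemma theta_morphM : {in H0 <*> N &, {morph theta : x y / x * y}}.
Proof.
move=> x y Dx Dy; have nD := subset_trans sDG nNG.
by rewrite /theta chi_morphM // morphM // (subsetP nD).
Qed.

Definition thetam := Morphism theta_morphM.

Lemma injm_theta : 'injm thetam.
Proof.
apply/subsetP => x; rewrite !inE => /andP[Dx].
rewrite /= /theta /chi => /eqP [e1]; case: ifP => [H0x _ | _ /eqP]; last by rewrite (negPf ntc).
have Nx : x \in N by apply: coset_idr => //; apply: (subsetP nNG); apply: (subsetP sDG).
have: x \in H0 :&: N by rewrite inE H0x Nx.
by rewrite tiH0N inE.
Qed.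

End Key.

Section Count.
Variables (gT cT : finGroupType) (G N : {group gT}) (C : {group cT}) (c : cT).
Hypotheses (sNG : N \subset G) (cGN : G \subset 'C(N)) (oN : #|N| = 2).
Hypotheses (Cc : c \in C) (ntc : c != 1) (oC : #|C| = 2).

Definition H0of (K : {set coset_of N}) : {group gT} :=
  odflt 1%G [pick H : {group gT} | (H \subset G) && (H :&: N == 1) && (H / N == K)].

Lemma H0ofP (H : {group gT}) : H \subset G -> H :&: N = 1 ->
  [/\ H0of (H / N) \subset G, H0of (H / N) :&: N = 1 & H0of (H / N) / N = H / N].
Proof.
move=> sHG tiHN; rewrite /H0of; case: pickP => [H' /= /andP[/andP[-> /eqP->] /eqP->] //|].
move/(_ H); rewrite /= sHG tiHN !eqxx /=.
by [].
Qed.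

Lemma sHD (H : {group gT}) : H \subset G -> H :&: N = 1 -> H \subset H0of (H / N) <*> N.
Proof.
move=> sHG tiHN; have [sH0G _ eq] := H0ofP sHG tiHN.
have nNG' := nNG cGN.
apply/subsetP => x Hx.
have Nx : x \in 'N(N) by apply: (subsetP nNG'); apply: (subsetP sHG).
have : x \in coset N @*^-1 (H0of (H / N) / N).
  by rewrite inE Nx /= inE eq mem_quotient.
rewrite quotientK ?(subset_trans sH0G nNG') // => /mulsgP[m h Nm Hh ->].
by rewrite groupM //; [apply: (subsetP (joing_subr _ _)) | apply: (subsetP (joing_subl _ _))].
Qed.

Definition Phi (H : {group gT}) : {set coset_of N * cT} :=
  if N \subset H then setX (H / N) C else theta N (H0of (H / N)) c @: H.

Lemma tiHN_of (H : {group gT}) : ~~ (N \subset H) -> H :&: N = 1.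
Proof. by move=> nNH; rewrite setIC prime_TIg // oN. Qed.

Lemma Phi_props (H : {group gT}) : H \subset G ->
  [/\ group_set (Phi H), Phi H \subset setX (G / N) C & #|Phi H| = #|H|].
Proof.
move=> sHG; have nNG' := nNG cGN; rewrite /Phi; case: ifP => sNH.
  split; first exact: group_setX.
    by rewrite setXS ?quotientS.
  by rewrite cardsX card_quotient ?(subset_trans sHG nNG') // oC -(Lagrange sNH) oN mulnC.
have tiHN := tiHN_of (negbT sNH).
have [sH0G tiH0N _] := H0ofP sHG tiHN.
pose f := thetam sNG cGN oN Cc oC sH0G tiH0N.
have eP : theta N (H0of (H / N)) c @: H = f @* H by rewrite morphimEsub // sHD.
rewrite eP; split; first exact: (valP (f @* H)%G).
  apply/subsetP => _ /morphimP[x Dx Hx ->].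
  by rewrite /f /= /theta in_setX mem_quotient ?(subsetP sHG) // /chi; case: ifP => _; rewrite ?group1.
by rewrite card_injm ?injm_theta ?sHD.
Qed.

Lemma Phi_inj (H H' : {group gT}) : H \subset G -> H' \subset G -> Phi H = Phi H' -> H = H'.
Proof.
move=> sHG sH'G; have nNG' := nNG cGN.
have cB : forall K : {group gT}, K \subset G -> ~~ (N \subset K) -> (1, c) \notin Phi K.
  move=> K sKG nNK; rewrite /Phi (negPf nNK); apply/imsetP => [[x Kx [e1 e2]]].
  have Nx : x \in N := coset_idr (subsetP nNG' x (subsetP sKG x Kx)) (esym e1).
  have x1 : x = 1.
    have : x \in K :&: N by rewrite inE Kx Nx.
    by rewrite tiHN_of // => /set1P.
  by move: e2; rewrite x1 /chi group1 => e2; move: ntc; rewrite -e2 eqxx.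
have cA : forall K : {group gT}, N \subset K -> (1, c) \in Phi K.
  by move=> K sNK; rewrite /Phi sNK in_setX group1 Cc.
have fstB : forall K : {group gT}, K \subset G -> ~~ (N \subset K) ->
    [set u.1 | u in Phi K] = K / N.
  move=> K sKG nNK; rewrite /Phi (negPf nNK) -imset_comp [in RHS]/quotient morphimEsub ?(subset_trans sKG nNG') //.
case: (boolP (N \subset H)) => sNH; case: (boolP (N \subset H')) => sNH' e.
- have eq : H / N = H' / N.
    apply/setP => a; have := congr1 (fun X : {set coset_of N * cT} => (a, 1) \in X) e.
    by rewrite /= /Phi sNH sNH' !in_setX group1 !andbT.
  have nH : N <| H by rewrite /normal sNH (subset_trans sHG nNG').
  have nH' : N <| H' by rewrite /normal sNH' (subset_trans sH'G nNG').
  by apply: val_inj => /=; rewrite -(quotientGK nH) eq quotientGK.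
- by move: (cA H sNH); rewrite e (negPf (cB _ sH'G sNH')).
- by move: (cA H' sNH'); rewrite -e (negPf (cB _ sHG sNH)).
have eq : H / N = H' / N by rewrite -fstB // e fstB.
have tiHN := tiHN_of sNH; have tiH'N := tiHN_of sNH'.
have [sH0G tiH0N _] := H0ofP sHG tiHN.
pose f := thetam sNG cGN oN Cc oC sH0G tiH0N.
have sHD1 := sHD sHG tiHN; have sHD2 := sHD sH'G tiH'N.
move: e sHD2; rewrite /Phi (negPf sNH) (negPf sNH') -eq => e sHD2.
apply: val_inj; apply: (injm_morphim_inj (injm_theta sNG cGN oN Cc ntc oC sH0G tiH0N)) => //.
by rewrite !morphimEsub //; exact: e.
Qed.

Lemma key_count k : s_k G k <= s_k (setX (G / N) C) k.
Proof.
rewrite /s_k; set S := [set H : {group gT} | _].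
pose F (H : {group gT}) := <<Phi H>>%G.
have FE : forall H, H \in S -> (F H : {set _}) = Phi H.
  move=> H; rewrite inE => /andP[sHG _]; have [gP _ _] := Phi_props sHG.
  exact: gen_set_id.
rewrite -(card_in_imset (f := F)).
  apply: subset_leq_card; apply/subsetP => _ /imsetP[H SH ->].
  have sHG : H \subset G by move: SH; rewrite inE => /andP[].
  have [_ sub card] := Phi_props sHG.
  by rewrite inE FE // sub card /=; move: SH; rewrite inE => /andP[].
move=> H H' SH SH' e.
have sHG : H \subset G by move: SH; rewrite inE => /andP[].
have sH'G : H' \subset G by move: SH'; rewrite inE => /andP[].
apply: Phi_inj => //; rewrite -FE // -(FE H') //; by rewrite e.
Qed.

End Count.

Lemma s_k_injm (aT rT : finGroupType) (G : {group aT}) (f : {morphism G >-> rT}) k :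
  'injm f -> s_k G k <= s_k (f @* G) k.
Proof.
move=> injf; rewrite /s_k; set S := [set H : {group aT} | _].
have SP : forall H, H \in S -> H \subset G by move=> H; rewrite inE => /andP[].
rewrite -(card_in_imset (f := fun H : {group aT} => (f @* H)%G)).
  apply: subset_leq_card; apply/subsetP => _ /imsetP[H SH ->].
  rewrite inE /= morphimS ?card_injm ?SP //=.
  by move: SH; rewrite inE => /andP[].
move=> H H' SH SH' e; apply: val_inj.
by apply: (injm_morphim_inj injf (SP _ SH) (SP _ SH')); rewrite -[f @* H]/(gval (f @* H)%G) e.
Qed.

Lemma main_ind m : forall (gT : finGroupType) (G M : {group gT}),
  2.-group G -> M <| G -> #|M| = (2 ^ m)%N ->
  forall (xT : finGroupType) (X Y E : {group xT}), Y \x E = X -> 2.-abelem E ->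
  #|E| = (2 ^ m)%N ->
  forall f : {morphism G >-> xT}, 'ker f = M -> f @* G = Y ->
  forall k, s_k G k <= s_k X k.
Proof.
elim: m => [|m IH] gT G M pG nMG oM xT X Y E eX abE oE f kf imf k.
  have M1 : M :=: 1 by apply: card1_trivg; rewrite oM.
  have E1 : E :=: 1 by apply: card1_trivg; rewrite oE.
  have eXY : X :=: Y by rewrite -eX E1 dprodg1.
  have injf : 'injm f by rewrite kf M1.
  by rewrite eXY -imf; apply: s_k_injm.
have [N [sNM nNG oN]] : exists N : {group gT}, [/\ N \subset M, N <| G & #|N| = 2].
  have := normal_pgroup (r := 1) pG nMG; rewrite oM pfactorK // => /(_ isT) [N [? ? oN]].
  by exists N; split => //; rewrite oN expn1.
have sNG : N \subset G := normal_sub nNG.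
have ntN : N :!=: 1 by rewrite trivg_card1 oN.
have sNZ : N \subset 'Z(G).
  case: (boolP (N \subset 'Z(G))) => // nsub.
  by have := meet_center_nil (pgroup_nil pG) nNG ntN; rewrite prime_TIg ?oN ?eqxx.
have cGN : G \subset 'C(N) by rewrite centsC (subset_trans sNZ) // subsetIr.
have [c Ec oc] : {c | c \in E & #[c] = 2} by apply: Cauchy => //; rewrite oE expnS dvdn_mulr.
have [B [sBE oB eE]] := p_abelem_split1 abE Ec.
pose C := <[c]>%G.
have oC : #|C| = 2 by [].
have Cc : c \in C := cycle_id c.
have ntc : c != 1 by rewrite -order_eq1 oc.
have [_ eYE cYE tiYE] := dprodP eX.
have sCE : C \subset E by rewrite cycle_subG.
have cYC : C \subset 'C(Y) := subset_trans sCE cYE.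
have tiYC : Y :&: C = 1 by apply/trivgP; rewrite -tiYE setIS.
have sKK : 'ker (coset N) \subset 'ker f by rewrite ker_coset kf.
pose g := factm_morphism sKK (normal_norm nNG).
have img : g @* (G / N) = Y by rewrite morphim_factm imf.
pose X' := setX_group (G / N)%G C.
pose f' (u : coset_of N * xT) := g u.1 * u.2.
have f'M : {in X' &, {morph f' : u v / u * v}}.
  move=> [a1 c1] [a2 c2]; rewrite !in_setX /= => /andP[A1 C1] /andP[A2 C2].
  rewrite /f' /= morphM //.
  have Ya2 : g a2 \in Y by rewrite -img mem_morphim.
  have comm : commute c1 (g a2) := centP (subsetP cYC _ C1) _ Ya2.
  by rewrite !mulgA -(mulgA (g a1) c1) comm mulgA.
pose fm := Morphism f'M.
have imfm : fm @* X' = Y * C.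
  rewrite morphimEsub //; apply/setP => z; apply/imsetP/mulsgP.
    case=> [[a c1]]; rewrite in_setX /= => /andP[A C1] ->; exists (g a) c1 => //.
    by rewrite -img mem_morphim.
  case=> y c1 Yy C1 ->; move: Yy; rewrite -img => /morphimP[a _ A ->].
  by exists (a, c1); rewrite ?in_setX ?A.
have oX' : #|X'| = #|G| by rewrite /= cardsX card_quotient ?normal_norm // oC -oN mulnC Lagrange.
have oG : #|G| = (#|M| * #|Y|)%N.
  by rewrite -imf card_morphim setIid kf Lagrange // normal_sub.
have oK : #|'ker fm| = (2 ^ m)%N.
  have h1 := card_morphim fm X'; rewrite setIid imfm TI_cardMg // oC in h1.
  have h2 := Lagrange (normal_sub (ker_normal fm)).
  rewrite -h1 oX' oG oM expnS in h2.
  have Ypos := cardG_gt0 Y.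
  move: h2; set K := #|_|; set t := (2 ^ m)%N.
  rewrite (mulnC 2 t) -mulnA (mulnC 2 #|Y|) => /eqP; rewrite eqn_pmul2r ?muln_gt0 ?Ypos // => /eqP; exact: id.
have abB : 2.-abelem B := abelemS sBE abE.
have oB' : #|B| = (2 ^ m)%N by rewrite oB oE oc expnS mulKn.
have eX' : (Y <*> C)%G \x B = X by rewrite /= -(dprodEY cYC tiYC) -dprodA eE eX.
have pX' : 2.-group X' by rewrite /pgroup oX'.
apply: leq_trans (key_count sNG cGN oN Cc ntc oC k) _.
apply: (IH _ X' ('ker fm)%G pX' (ker_normal fm) oK _ X (Y <*> C)%G B eX' abB oB' fm erefl).
by rewrite imfm /= cent_joinEr.
Qed.

Lemma final (gT : finGroupType) (G M : {group gT}) (n r : nat)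
    (eT : finGroupType) (E : {group eT}) :
  #|G| = (2 ^ n)%N -> M <| G -> #|M| = (2 ^ r)%N ->
  2.-abelem E -> #|E| = (2 ^ r)%N ->
  forall k : nat, k <= n -> s_k G k <= s_k (setX (G / M) E) k.
Proof.
move=> oG nMG oM abE oE k _.
have pG : 2.-group G by rewrite /pgroup oG pnatX pnat_id.
have nMG' : G \subset 'N(M) := normal_norm nMG.
pose f0 (x : gT) : coset_of M * eT := (coset M x, 1).
have f0M : {in G &, {morph f0 : x y / x * y}}.
  move=> x y Gx Gy; rewrite /f0 morphM ?(subsetP nMG') //.
  by change ((coset M x * coset M y, 1) = (coset M x * coset M y, (1 : eT) * 1) :> (coset_of M * eT)); rewrite mulg1.
pose f := Morphism f0M.
have kf : 'ker f = M.
  apply/setP => x; rewrite !inE /= /f0.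
  case: (boolP (x \in G)) => Gx /=; last first.
    by apply/esym/negbTE; apply: contra Gx; apply: (subsetP (normal_sub nMG)).
  case: eqP => [e|ne].
    by apply/esym; exact: coset_idr (subsetP nMG' x Gx) (congr1 fst e).
  by apply/esym/negbTE/negP => Mx; apply: ne; rewrite coset_id.
have imf : f @* G = setX (G / M) 1.
  rewrite morphimEsub //; apply/setP => [[a b]]; rewrite in_setX.
  apply/imsetP/andP => [[x Gx [-> ->]]|[A B1]].
    by split; [exact: mem_quotient | exact: group1].
  move: A => /morphimP[x Nx Gx ->]; exists x => //.
  by move/set1P: B1 => ->.
have eX := setX_dprod (G / M)%G E.
have abE' : 2.-abelem (setX_group (1%G : {group coset_of M}) E).
  by have := morphim_abelem (@pair1g_morphism (coset_of M) eT) abE; rewrite morphim_pair1g.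
have oE' : #|setX_group (1%G : {group coset_of M}) E| = (2 ^ r)%N by rewrite /= cardsX cards1 mul1n.
exact: (main_ind pG nMG oM eX abE' oE' kf imf k).
Qed.

End Aux.

Theorem lemma2p2 (gT : finGroupType) (G M : {group gT}) (n r : nat)
    (eT : finGroupType) (E : {group eT}) :
  #|G| = 2 ^ n -> (M <| G)%g -> #|M| = 2 ^ r ->
  (2.-abelem E)%g -> #|E| = 2 ^ r ->
  forall k : nat, k <= n -> s_k G k <= s_k (setX (G / M)%g E) k.
Proof. exact: Aux.final. Qed.
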